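(* Let $k\ge1$, $r=\sqrt[k]{p}$. In multi-level MS with string-based regular sampling using a sampling factor $v=\Theta(kr)=\Theta(k\sqrt[k]{p})$, the number of strings per PE is in $\mathcal{O}(n/p)$ in each level of the algorithm.
   Context: $p$ PEs hold in total $n$ strings, $\Theta(n/p)$ per PE initially. Multi-level MS (with $p=r^k$): each PE sorts its local strings; then on each level $t=1,\dots,k$ the PEs form $r^{t-1}$ groups of $p'=r^{k+1-t}$ consecutive PEs, each group independently sorting the concatenation $S'$ of its PEs' locally sorted arrays $S_i$: $r-1$ splitters $f_1<\dots<f_{r-1}$ are chosen, bucket $B^j=\bigcup_i\{s\in S_i:f_j<s\le f_{j+1}\}$ ($f_0=-\infty,f_r=\infty$) is assigned to the $j$-th subgroup of $p''=p'/r$ PEs such that each PE of that subgroup receives $|B^j|/p''$ strings, and received sequences are merged. String-based regular sampling with factor $v$: with $\omega=|S'|/(p'(v+1))$ (assumed to be an integer), PE $i$ draws $\lceil|S_i|/\omega\rceil-1$ evenly spaced samples from its sorted local array, the first PEs drawing one extra sample if fewer than $p'(v+1)$ samples result; the samples $V$ are sorted globally and $f_j=V[j|V|/r-1]$. *)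

(* Defs.v *)
From HB Require Import structures.
From mathcomp Require Import all_boot all_order all_algebra.
Set Implicit Arguments. Unset Strict Implicit. Unset Printing Implicit Defensive.
Import Order.TTheory GRing.Theory Num.Theory.

Section MS.
Context {disp : Order.disp_t} {T : orderType disp}.

Definition group_concat (S : nat -> seq T) (q : nat) : seq T :=
  flatten [seq S i | i <- iota 0 q].

Definition ceil_div (a b : nat) : nat := (a + b.-1) %/ b.

(* the ceil(|s|/w) - 1 evenly spaced samples of the sorted local array s:
   the elements at (1-based) positions w, 2w, ..., (ceil(|s|/w)-1) w *)
Definition regular_samples (w : nat) (s : seq T) : seq T :=
  if s is x :: _ then
    [seq nth x s (j * w).-1 | j <- iota 1 (ceil_div (size s) w).-1]
  else [::].

(* splitter f_j = V[j|V|/r - 1] (0-based), for 1 <= j <= r-1; x0 is an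
   irrelevant default (the index is always in range) *)
Definition splitter (V : seq T) (r j : nat) (x0 : T) : T :=
  nth x0 V ((j * size V) %/ r).-1.

(* s belongs to bucket B^j, i.e. f_j < s <= f_(j+1), with f_0 = -oo, f_r = +oo *)
Definition in_bucket (V : seq T) (r j : nat) (s : T) : bool :=
  ((j == 0) || (splitter V r j s < s)%O) &&
  ((j.+1 == r) || (s <= splitter V r j.+1 s)%O).

Definition ms_group_step (r v p' : nat) (S S' : nat -> seq T) : Prop :=
  let p'' := p' %/ r in
  let A := group_concat S p' in
  exists w : nat, 0 < w /\ size A = w * (p' * v.+1) /\
  exists e : nat -> T,
    let reg := fun i => regular_samples w (S i) in
    let d := p' * v.+1 - \sum_(i < p') size (reg i) in
    (* the first d PEs each draw one extra sample (any further element) *)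
    (forall i, i < d -> e i \in S i /\ e i \notin reg i) /\
    let V := sort <=%O
      (flatten [seq reg i ++ (if i < d then [:: e i] else [::]) | i <- iota 0 p']) in
    forall j, j < r ->
      let B := [seq s <- A | in_bucket V r j s] in
      (* bucket B^j is distributed over the j-th subgroup of p'' PEs *)
      perm_eq (group_concat (fun i => S' (j * p'' + i)) p'') B /\
      (forall i, i < p'' ->
         sorted <=%O (S' (j * p'' + i)) /\ size (S' (j * p'' + i)) * p'' = size B).

Definition ms_level (r k v t : nat) (st st' : nat -> seq T) : Prop :=
  let p' := r ^ (k.+1 - t) in
  forall g, g < r ^ t.-1 ->
    ms_group_step r v p' (fun i => st (g * p' + i)) (fun i => st' (g * p' + i)).

(* st t i = the local array of PE i after level t; st 0 = locally sorted input *)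
Definition ms_execution (r k v : nat) (input : nat -> seq T)
    (st : nat -> nat -> seq T) : Prop :=
  (forall i, st 0 i = sort <=%O (input i)) /\
  (forall t, 1 <= t <= k -> ms_level r k v t (st t.-1) (st t)).

End MS.

(* Main.v *)
Require Import Defs.
From HB Require Import structures.
From mathcomp Require Import all_boot all_order all_algebra.
From mathcomp Require Import zify ring lra.
Import Order.TTheory GRing.Theory Num.Theory.

Section Aux.
Context {disp : Order.disp_t} {T : orderType disp}.
Implicit Types (s : seq T) (y : T).

Definition cle y := fun z : T => (z <= y)%O.

Lemma sorted_nth_le s y x0 i : sorted <=%O s -> i < size s ->
  (nth x0 s i <= y)%O = (i < count (cle y) s).
Proof.
elim: s i => [|x s IH] i //= Hs Hi.
have Hs' := path_sorted Hs.
have Hall := order_path_min (@le_trans _ T) Hs.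
have H0 : ~~ (x <= y)%O -> count (cle y) s = 0.
  move=> Hxy; apply/eqP; rewrite -leqn0 leqNgt -has_count; apply/hasPn => z Hz.
  rewrite /cle; apply/negP => Hzy; move/allP: Hall => /(_ z Hz) Hxz.
  by move/negP: Hxy; apply; apply: le_trans Hxz Hzy.
case: i Hi => [|i] Hi /=.
  rewrite /cle; case: (boolP (x <= y)%O) => Hxy //=.
  by rewrite H0.
rewrite /cle; case: (boolP (x <= y)%O) => Hxy /=.
  by rewrite IH.
rewrite (H0 Hxy) ltn0; apply/negP => Hn; move/negP: Hxy; apply.
have Hm : nth x0 s i \in s by apply: mem_nth.
by move/allP: Hall => /(_ _ Hm) Hx; apply: le_trans Hx Hn.
Qed.

Lemma count_iota_mul (m w c : nat) : 0 < w ->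
  count (fun j => j * w <= c) (iota 1 m) = minn m (c %/ w).
Proof.
move=> Hw; elim: m => [|m IH]; first by rewrite min0n.
rewrite -[m.+1]addn1 iotaD count_cat IH /= add1n addn0.
rewrite -(leq_divRL _ _ Hw).
case: (leqP m.+1 (c %/ w)) => H /=; lia.
Qed.

Lemma reg_count w s y : 0 < w -> sorted <=%O s ->
  count (cle y) (regular_samples w s) = minn ((ceil_div (size s) w).-1) (count (cle y) s %/ w).
Proof.
move=> Hw Hs; rewrite /regular_samples.
case Es: s => [|x s'].
  by rewrite /= div0n minn0.
rewrite -Es count_map -(count_iota_mul _ _ _ Hw).
apply: eq_in_count => j; rewrite mem_iota => /andP [Hj1 Hj2] /=.
have Hlt : (j * w).-1 < size s.
  rewrite /ceil_div in Hj2.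
  have : j <= ((size s + w.-1) %/ w).-1 by lia.
  move=> Hj; have Hs0 : 0 < size s by rewrite Es.
  have := leq_divRL (size s + w.-1) j Hw.
  have : j.+1 <= (size s + w.-1) %/ w by lia.
  rewrite leq_divRL // => H _; rewrite mulSn in H; lia.
rewrite /cle (sorted_nth_le _ y x _ Hs Hlt).
have Hjw : 0 < j * w by rewrite muln_gt0; apply/andP; split; lia.
by rewrite -[in RHS](prednK Hjw).
Qed.

Lemma reg_size w s : 0 < w -> size (regular_samples w s) = (ceil_div (size s) w).-1.
Proof.
move=> Hw; rewrite /regular_samples; case: s => [|x s] /=.
  by rewrite /ceil_div /= divn_small //; lia.
by rewrite size_map size_iota.
Qed.

Lemma ceil_bounds n w : 0 < w -> (ceil_div n w).-1 * w <= n /\ n <= w * (ceil_div n w).-1.+1.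
Proof.
move=> Hw; rewrite /ceil_div.
have E := divn_eq (n + w.-1) w.
have Hm := ltn_pmod (n + w.-1) Hw.
split; nia.
Qed.


Lemma seq_bounds w s y : 0 < w -> sorted <=%O s ->
  let R := regular_samples w s in
  [/\ w * count (cle y) R <= count (cle y) s,
      count (cle y) s <= w * (count (cle y) R + 1),
      w * size R <= size s & size s <= w * (size R + 1)].
Proof.
move=> Hw Hs R; rewrite /R reg_count // reg_size //.
have [H1 H2] := ceil_bounds (size s) w Hw.
have Hc := count_size (cle y) s.
set m := (ceil_div (size s) w).-1 in H1 H2 *.
set c := count (cle y) s in Hc *.
have E := divn_eq c w. have Hm := ltn_pmod c Hw.
split; nia.
Qed.

Lemma flat_S (T' : Type) (F : nat -> seq T') q :
  flatten [seq F i | i <- iota 0 q.+1] = flatten [seq F i | i <- iota 0 q] ++ F q.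
Proof. by rewrite -addn1 iotaD map_cat flatten_cat /= cats0. Qed.

Lemma group_bounds (S : nat -> seq T) q w y : 0 < w ->
  (forall i, i < q -> sorted <=%O (S i)) ->
  let A := flatten [seq S i | i <- iota 0 q] in
  let R := flatten [seq regular_samples w (S i) | i <- iota 0 q] in
  [/\ w * count (cle y) R <= count (cle y) A,
      count (cle y) A <= w * (count (cle y) R + q),
      w * size R <= size A & size A <= w * (size R + q)].
Proof.
move=> Hw; elim: q => [|q IH] Hs A R.
  by rewrite /A /R /= !muln0.
have [I1 I2 I3 I4] := IH (fun i Hi => Hs i (ltnW Hi)).
have [J1 J2 J3 J4] := seq_bounds w (S q) y Hw (Hs q (ltnSn q)).
rewrite /A /R !flat_S !count_cat !size_cat.
split; nia.
Qed.

Lemma size_ext (e : nat -> T) d q :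
  size (flatten [seq (if i < d then [:: e i] else [::]) | i <- iota 0 q]) = minn d q.
Proof.
elim: q => [|q IH]; first by rewrite minn0.
rewrite flat_S size_cat IH; case: (ltnP q d) => H /=; lia.
Qed.

Lemma perm_flat_cat (F G : nat -> seq T) q :
  perm_eq (flatten [seq F i ++ G i | i <- iota 0 q])
          (flatten [seq F i | i <- iota 0 q] ++ flatten [seq G i | i <- iota 0 q]).
Proof.
elim: q => [|q IH] //.
by rewrite !flat_S perm_sym perm_catACA perm_cat2r perm_sym.
Qed.

Lemma sum_size_flat (F : nat -> seq T) q :
  \sum_(i < q) size (F i) = size (flatten [seq F i | i <- iota 0 q]).
Proof.
elim: q => [|q IH]; first by rewrite big_ord0.
by rewrite big_ord_recr (flat_S _ F q) size_cat -IH.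
Qed.

Lemma uniq_flat_comp (F : nat -> seq T) m q i :
  uniq (flatten [seq F i | i <- iota m q]) -> m <= i < m + q -> uniq (F i).
Proof.
elim: q m => [|q IH] m /=; first by lia.
rewrite cat_uniq => /and3P [H1 _ H3] Hi.
case: (eqVneq i m) => [-> //|Hne].
apply: (IH m.+1 H3); lia.
Qed.

Lemma uniq_flat_sub (F L : nat -> seq T) m q :
  uniq (flatten [seq F i | i <- iota m q]) ->
  (forall i, m <= i < m + q -> uniq (L i) /\ {subset L i <= F i}) ->
  uniq (flatten [seq L i | i <- iota m q]).
Proof.
elim: q m => [|q IH] m //=.
rewrite cat_uniq => /and3P [H1 H2 H3] HL.
have [U0 S0] := HL m ltac:(lia).
rewrite cat_uniq U0 (IH m.+1 H3) ?andbT; last by move=> i Hi; apply: HL; lia.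
apply/hasPn => x /flatten_mapP [i Hi Hx].
have [_ Si] := HL i ltac:(move: Hi; rewrite mem_iota; lia).
apply/negP => Hm; move/hasPn: H2 => /(_ x) H.
have Hx2 : x \in flatten [seq F i | i <- iota m.+1 q].
  by apply/flatten_mapP; exists i => //; apply: Si.
by move: (H Hx2); rewrite (S0 x Hm).
Qed.


Lemma reg_idx w s j : 0 < w -> 0 < size s ->
  j \in iota 1 (ceil_div (size s) w).-1 -> (j * w).-1 < size s.
Proof.
move=> Hw Hs0; rewrite mem_iota => /andP [Hj1 Hj2].
rewrite /ceil_div in Hj2.
have : j.+1 <= (size s + w.-1) %/ w by lia.
rewrite leq_divRL // => H; rewrite mulSn in H; lia.
Qed.

Lemma reg_sub w s : 0 < w -> {subset regular_samples w s <= s}.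
Proof.
move=> Hw z; rewrite /regular_samples; case Es: s => [|x s'] //.
rewrite -Es => /mapP [j Hj ->]; apply: mem_nth; apply: reg_idx => //.
by rewrite Es.
Qed.

Lemma reg_uniq w s : 0 < w -> uniq s -> uniq (regular_samples w s).
Proof.
move=> Hw Hu; rewrite /regular_samples; case Es: s => [|x s'] //.
rewrite -Es map_inj_in_uniq ?iota_uniq // => j1 j2 H1 H2 /eqP.
have Hs0 : 0 < size s by rewrite Es.
rewrite nth_uniq ?reg_idx // => /eqP E.
move: H1 H2; rewrite !mem_iota => /andP [H1 _] /andP [H2 _].
have E2 : j1 * w = j2 * w.
  have : 0 < j1 * w by rewrite muln_gt0 H1.
  have : 0 < j2 * w by rewrite muln_gt0 H2.
  lia.
by apply/eqP; rewrite -(eqn_pmul2r Hw); apply/eqP.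
Qed.

Lemma sorted_count_ge V x0 a : sorted <=%O V -> a < size V ->
  a < count (cle (nth x0 V a)) V.
Proof. by move=> Hs Ha; rewrite -(sorted_nth_le _ _ x0 _ Hs Ha). Qed.

Lemma sorted_count_le V x0 b : sorted <=%O V -> uniq V -> b < size V ->
  count (cle (nth x0 V b)) V <= b.+1.
Proof.
move=> Hs Hu Hb; rewrite leqNgt; apply/negP => H.
have Hc := count_size (cle (nth x0 V b)) V.
have Hb1 : b.+1 < size V.
  exact: leq_trans H Hc.
have := sorted_nth_le V (nth x0 V b) x0 _ Hs Hb1; rewrite H => Hle.
have Hlt : sorted <%O V by rewrite lt_sorted_uniq_le Hu Hs.
have := sorted_ltn_nth (@lt_trans _ T) x0 Hlt; move=> /(_ b b.+1).
rewrite !inE => /(_ Hb Hb1 (ltnSn b)) Hlt2.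
by move: (lt_le_trans Hlt2 Hle); rewrite ltxx.
Qed.


Lemma count_split (a b : pred T) (s : seq T) : (forall x, a x -> b x) ->
  count (fun x => ~~ a x && b x) s + count a s = count b s.
Proof.
move=> Hab; elim: s => [|x s IH] //=.
case Ha: (a x); first by rewrite (Hab x Ha) /=; lia.
by case: (b x) => /=; lia.
Qed.

Lemma arith1 (a b c d e : nat) : a <= b * (c * d) -> a * e <= b * e * c * d.
Proof. move=> H; have := leq_mul H (leqnn e); move/leq_trans; apply; lia. Qed.

Lemma arith2 (a b d e : nat) : a <= b * d -> a * e <= b * e * d.
Proof. move=> H; have := leq_mul H (leqnn e); move/leq_trans; apply; lia. Qed.

Lemma step_bound r v p2 (S S' : nat -> seq T) :
  0 < r -> 0 < p2 ->
  (forall i, i < r * p2 -> sorted <=%O (S i)) ->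
  uniq (group_concat S (r * p2)) ->
  ms_group_step r v (r * p2) S S' ->
  forall j, j < r ->
   [/\ uniq (group_concat (fun i => S' (j * p2 + i)) p2),
       size (group_concat (fun i => S' (j * p2 + i)) p2) * (r * p2 * v.+1)
         <= size (group_concat S (r * p2)) * p2 * (v + 3 + 2 * r)
     & forall i, i < p2 -> sorted <=%O (S' (j * p2 + i)) /\
         size (S' (j * p2 + i)) * (r * p2 * v.+1)
           <= size (group_concat S (r * p2)) * (v + 3 + 2 * r)].
Proof.
move=> Hr Hp2 Hsort Huniq [w [Hw [HA [e [Hext Hmain]]]]] j Hj.
have Ep : (r * p2) %/ r = p2 by rewrite mulKn.
rewrite Ep in Hmain.
cbv zeta in Hext, Hmain.
rewrite (sum_size_flat (fun i => regular_samples w (S i))) in Hext Hmain.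
set q := r * p2 in Hsort Huniq HA Hext Hmain *.
set A := group_concat S q in Huniq HA Hmain *.
set R := flatten [seq regular_samples w (S i) | i <- iota 0 q] in Hext Hmain.
set d := q * v.+1 - size R in Hext Hmain.
set V := sort _ _ in Hmain.
set EXT := flatten [seq (if i < d then [:: e i] else [::]) | i <- iota 0 q].
have HVperm : perm_eq V (R ++ EXT).
  by rewrite /V perm_sort perm_flat_cat.
have sizeV : size V = size R + minn d q by rewrite (perm_size HVperm) size_cat size_ext.
have countV : forall y, count (cle y) V <= count (cle y) R + q.
  move=> y; rewrite ((permP HVperm) _) count_cat leq_add2l.
  apply: leq_trans (count_size _ _) _; rewrite size_ext; apply: geq_minr.
have countV' : forall y, count (cle y) R <= count (cle y) V.
  by move=> y; rewrite ((permP HVperm) _) count_cat leq_addr.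
have GB := fun y => group_bounds S q w y Hw Hsort.
have [_ _ GB3 GB4] := GB (head (head (e 0) (S 0)) A).
rewrite -/A -/R in GB3 GB4.
have HRq : size R <= q * v.+1.
  by move: GB3; rewrite HA leq_pmul2l.
have Hq0 : 0 < q by rewrite muln_gt0 Hr Hp2.
have sizeV0 : 0 < size V.
  rewrite sizeV /d; have : 0 < q * v.+1 by rewrite muln_gt0 Hq0.
  move: HRq Hq0; clear; lia.
have sizeVM : size V <= q * v.+1.
  rewrite sizeV /d; move: HRq; clear; lia.
have sortV : sorted <=%O V by rewrite /V sort_sorted //; exact: le_total.
have uniqV : uniq V.
  rewrite /V sort_uniq; apply: (uniq_flat_sub S _ 0 q Huniq).
  move=> i /andP [_ Hi]; rewrite add0n in Hi.
  have Hui : uniq (S i) by apply: (uniq_flat_comp S 0 q i Huniq); lia.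
  case: (ltnP i d) => Hid.
    have [He1 He2] := Hext i Hid.
    rewrite cat_uniq reg_uniq //= orbF andbT; split => // z.
    rewrite mem_cat inE => /orP [/reg_sub -> // | /eqP -> //].
  rewrite cats0 reg_uniq //; split => // z /reg_sub; exact.
have [z0 _] : exists z0 : T, z0 \in V.
  move: sizeV0; case: (V) => [|z V'] //= _; by exists z; rewrite inE eqxx.
set F := fun i => nth z0 V ((i * size V) %/ r).-1.
have idx_lt : forall i, i <= r -> ((i * size V) %/ r).-1 < size V.
  move=> i Hi; have : (i * size V) %/ r <= size V.
    rewrite -{2}(mulKn (size V) Hr); apply: leq_div2r; by rewrite leq_mul2r Hi orbT.
  move: sizeV0; clear; lia.
have Hin : forall x : T, in_bucket V r j x =
   ((j == 0) || (F j < x)%O) && ((j.+1 == r) || (x <= F j.+1)%O).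
  move=> x; rewrite /in_bucket /splitter /F.
  rewrite (set_nth_default z0 x (idx_lt j (ltnW Hj))).
  by rewrite (set_nth_default z0 x (idx_lt j.+1 Hj)).
set B := [seq x <- A | in_bucket V r j x].
have Bbound : size B <= w * (p2 * (v + 3 + 2 * r)).
  rewrite /B size_filter.
  set lo := fun x : T => (j != 0) && (x <= F j)%O.
  set hi := fun x : T => (j.+1 == r) || (x <= F j.+1)%O.
  have Eb : count (in_bucket V r j) A = count (fun x => ~~ lo x && hi x) A.
    by apply: eq_count => x; rewrite Hin /lo negb_and negbK -ltNge.
  have Hmono : forall x, lo x -> hi x.
    move=> x /andP [_ Hx]; rewrite /hi; case: eqP => //= _.
    apply: le_trans Hx _; rewrite /F.
    apply: (sorted_leq_nth le_trans le_refl z0 sortV); rewrite ?inE ?idx_lt //.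
      by apply: ltnW.
    have H : (j * size V) %/ r <= (j.+1 * size V) %/ r.
      by apply: leq_div2r; rewrite leq_mul2r leqnSn orbT.
    move: H; clear; lia.
  have Hsplit := @count_split lo hi A Hmono.
  have Hhi : count hi A <= w * ((j.+1 * size V) %/ r + 1 + q).
    case: (eqVneq j.+1 r) => Hjr.
      have -> : count hi A = count predT A by apply: eq_count => x; rewrite /hi Hjr eqxx.
      rewrite count_predT Hjr mulKn //.
      have GB4' : size A <= w * (size R + q) := GB4.
      move: GB4' sizeV; clear; nia.
    have -> : count hi A = count (cle (F j.+1)) A.
      by apply: eq_count => x; rewrite /hi (negbTE Hjr).
    have [_ G2 _ _] := GB (F j.+1); rewrite -/A -/R in G2.
    have C1 := countV' (F j.+1).
    have C2 := sorted_count_le V z0 _ sortV uniqV (idx_lt j.+1 Hj).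
    have G2' : count (cle (F j.+1)) A <= w * (count (cle (F j.+1)) R + q) := G2.
    have C2' : count (cle (F j.+1)) V <= ((j.+1 * size V) %/ r).-1.+1 := C2.
    apply: leq_trans G2' _; rewrite leq_mul2l; apply/orP; right.
    move: C1 C2'; generalize (count (cle (F j.+1)) R)
      (count (cle (F j.+1)) V) ((j.+1 * size V) %/ r); clear; lia.

  have Hlo : w * ((j * size V) %/ r) <= count lo A + w * q.
    case: (eqVneq j 0) => Hj0.
      by rewrite Hj0 mul0n div0n muln0.
    have -> : count lo A = count (cle (F j)) A.
      by apply: eq_count => x; rewrite /lo Hj0.
    have [G1 _ _ _] := GB (F j); rewrite -/A -/R in G1.
    have C1 := countV (F j).
    have C2 := sorted_count_ge V z0 _ sortV (idx_lt j (ltnW Hj)).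
    have G1' : w * count (cle (F j)) R <= count (cle (F j)) A := G1.
    have C2' : ((j * size V) %/ r).-1 < count (cle (F j)) V := C2.
    have HX : (j * size V) %/ r <= count (cle (F j)) R + q.
      move: C1 C2'; generalize (count (cle (F j)) R)
        (count (cle (F j)) V) ((j * size V) %/ r); clear; lia.
    apply: leq_trans (_ : w * (count (cle (F j)) R + q) <= _).
      by rewrite leq_mul2l HX orbT.
    by rewrite mulnDr leq_add2r.
  have Hdiv : (j.+1 * size V) %/ r <= (j * size V) %/ r + size V %/ r + 1.
    by rewrite mulSn addnC; exact: leq_divDl.
  have HVr : size V %/ r <= p2 * v.+1.
    rewrite -(mulKn (p2 * v.+1) Hr); apply: leq_div2r; by rewrite mulnA.
  rewrite Eb.
  move: Hsplit Hhi Hlo Hdiv HVr Hp2; rewrite /q.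
  generalize (count (fun x => ~~ lo x && hi x) A) (count lo A) (count hi A)
    ((j.+1 * size V) %/ r) ((j * size V) %/ r) (size V %/ r); clear; nia.
have [Hperm Hpe] := Hmain j Hj.
rewrite HA; split.
- by rewrite (perm_uniq Hperm) filter_uniq.
- rewrite (perm_size Hperm) -/B.
  exact: arith1 Bbound.
- move=> i Hi; have [Hs1 Hs2] := Hpe i Hi; split => //.
  have H : size (S' (j * p2 + i)) <= w * (v + 3 + 2 * r).
    rewrite -(leq_pmul2r Hp2) Hs2 -/B; apply: leq_trans Bbound _.
    by rewrite mulnCA mulnC.
  exact: arith2 H.
Qed.


Lemma gc_ext (F G : nat -> seq T) q : (forall i, F i = G i) ->
  group_concat F q = group_concat G q.
Proof. by move=> H; rewrite /group_concat; congr flatten; apply: eq_map. Qed.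

Lemma perm_flat_map (F G : nat -> seq T) (s : seq nat) : (forall i, perm_eq (F i) (G i)) ->
  perm_eq (flatten [seq F i | i <- s]) (flatten [seq G i | i <- s]).
Proof. by move=> H; elim: s => [|x s IH] //=; apply: perm_cat. Qed.

Definition Inv r k v n (st : nat -> nat -> seq T) t :=
  forall g, g < r ^ t ->
    (forall i, i < r ^ (k - t) -> sorted <=%O (st t (g * r ^ (k - t) + i))) /\
    uniq (group_concat (fun i => st t (g * r ^ (k - t) + i)) (r ^ (k - t))) /\
    size (group_concat (fun i => st t (g * r ^ (k - t) + i)) (r ^ (k - t))) * r ^ k * v.+1 ^ t
      <= n * r ^ (k - t) * (v + 3 + 2 * r) ^ t.

Lemma arith3 (a b n p E Et D Dt r q : nat) : 0 < r * q ->
  a * (r * q * E) <= b * q * D -> b * p * Et <= n * (r * q) * Dt ->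
  a * p * (E * Et) <= n * q * (D * Dt).
Proof.
move=> Hrq H1 H2; rewrite -(leq_pmul2r Hrq).
have -> : a * p * (E * Et) * (r * q) = (a * (r * q * E)) * (p * Et) by ring.
apply: leq_trans (leq_mul H1 (leqnn _)) _.
have -> : b * q * D * (p * Et) = (b * p * Et) * (q * D) by ring.
apply: leq_trans (leq_mul H2 (leqnn _)) _.
have -> : n * (r * q) * Dt * (q * D) = n * q * (D * Dt) * (r * q) by ring.
by [].
Qed.

Lemma arith4 (a b n p E Et D Dt r q : nat) : 0 < r * q ->
  a * (r * q * E) <= b * D -> b * p * Et <= n * (r * q) * Dt ->
  a * p * (E * Et) <= n * (D * Dt).
Proof.
move=> Hrq H1 H2; rewrite -(leq_pmul2r Hrq).
have -> : a * p * (E * Et) * (r * q) = (a * (r * q * E)) * (p * Et) by ring.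
apply: leq_trans (leq_mul H1 (leqnn _)) _.
have -> : b * D * (p * Et) = (b * p * Et) * D by ring.
apply: leq_trans (leq_mul H2 (leqnn _)) _.
have -> : n * (r * q) * Dt * D = n * (D * Dt) * (r * q) by ring.
by [].
Qed.


Lemma inv_step r k v n (st : nat -> nat -> seq T) t : 0 < r -> t < k ->
  Inv r k v n st t -> ms_level r k v t.+1 (st t) (st t.+1) ->
  Inv r k v n st t.+1 /\
  (forall i, i < r ^ k -> size (st t.+1 i) * r ^ k * v.+1 ^ t.+1 <= n * (v + 3 + 2 * r) ^ t.+1).
Proof.
move=> Hr Htk HI HL.
set q := r ^ (k - t.+1).
have Ep : r ^ (k - t) = r * q by rewrite /q -expnS subnSK.
have Hq : 0 < q by rewrite expn_gt0 Hr.
have Hrq : 0 < r * q by rewrite muln_gt0 Hr Hq.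
have Hold : forall g, g < r ^ t ->
   (forall i, i < r * q -> sorted <=%O (st t (g * (r * q) + i))) /\
    uniq (group_concat (fun i => st t (g * (r * q) + i)) (r * q)) /\
    size (group_concat (fun i => st t (g * (r * q) + i)) (r * q)) * r ^ k * v.+1 ^ t
      <= n * (r * q) * (v + 3 + 2 * r) ^ t.
  by move=> g Hg; have := HI g Hg; rewrite Ep.
have HL' : forall g, g < r ^ t -> ms_group_step r v (r * q)
   (fun i => st t (g * (r * q) + i)) (fun i => st t.+1 (g * (r * q) + i)).
  by move=> g Hg; have := HL g Hg; rewrite /= subSS Ep.
have Hrk : r ^ k = r ^ t * (r * q) by rewrite -Ep -expnD subnKC // ltnW.
split.
  move=> g' Hg'.
  have Hg : g' %/ r < r ^ t by rewrite ltn_divLR // -expnSr.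
  have Hj : g' %% r < r by rewrite ltn_pmod.
  have Eg : forall i, g' * q + i = g' %/ r * (r * q) + (g' %% r * q + i).
    move=> i; rewrite {1}(divn_eq g' r); ring.
  have [H1 [H2 _]] := Hold _ Hg.
  have [U Sz Ps] := step_bound _ _ _ _ _ Hr Hq H1 H2 (HL' _ Hg) _ Hj.
  have Egc : group_concat (fun i => st t.+1 (g' * q + i)) q =
             group_concat (fun i => st t.+1 (g' %/ r * (r * q) + (g' %% r * q + i))) q.
    by apply: gc_ext => i; rewrite Eg.
  have [_ [_ Ob]] := Hold _ Hg.
  rewrite Egc; split; last split => //.
    by move=> i Hi; rewrite Eg; have [] := Ps i Hi.
  rewrite !expnS; exact: arith3 Hrq Sz Ob.
move=> i Hi.
have Hg : i %/ (r * q) < r ^ t by rewrite ltn_divLR // -Hrk.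
have Hi0 : i %% (r * q) < r * q by rewrite ltn_pmod.
have Hj : i %% (r * q) %/ q < r by rewrite ltn_divLR // mulnC.
have Hi1 : i %% (r * q) %% q < q by rewrite ltn_pmod.
have Ei : i = i %/ (r * q) * (r * q) + (i %% (r * q) %/ q * q + i %% (r * q) %% q).
  by rewrite -divn_eq -divn_eq.
have [H1 [H2 _]] := Hold _ Hg.
  have [U Sz Ps] := step_bound _ _ _ _ _ Hr Hq H1 H2 (HL' _ Hg) _ Hj.
have [_ [_ Ob]] := Hold _ Hg.
have [_ P2] := Ps _ Hi1.
rewrite Ei !expnS; exact: arith4 Hrq P2 Ob.
Qed.


Lemma exec_bound r k v n (input : nat -> seq T) (st : nat -> nat -> seq T) :
  0 < r -> uniq (flatten [seq input i | i <- iota 0 (r ^ k)]) ->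
  n = \sum_(i < r ^ k) size (input i) -> ms_execution r k v input st ->
  forall t, t <= k -> Inv r k v n st t /\
    (0 < t -> forall i, i < r ^ k ->
       size (st t i) * r ^ k * v.+1 ^ t <= n * (v + 3 + 2 * r) ^ t).
Proof.
move=> Hr Hu Hn [H0 HL]; elim=> [|t IH] Ht.
  split => // g; rewrite expn0 ltnS leqn0 => /eqP -> ; rewrite subn0 mul0n.
  have Egc : group_concat (fun i => st 0 (0 + i)) (r ^ k) =
             group_concat (fun i => sort <=%O (input i)) (r ^ k).
    by apply: gc_ext => i; rewrite add0n H0.
  have Hp : perm_eq (group_concat (fun i => sort <=%O (input i)) (r ^ k))
                    (flatten [seq input i | i <- iota 0 (r ^ k)]).
    by apply: perm_flat_map => i; rewrite perm_sort.
  rewrite Egc (perm_uniq Hp) Hu (perm_size Hp) -sum_size_flat -Hn !expn0 !muln1.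
  split => // i _; rewrite add0n H0; apply: sort_sorted; exact: le_total.
have [IH1 _] := IH (ltnW Ht).
have := inv_step _ _ _ _ _ _ Hr Ht IH1 (HL t.+1 ltac:(rewrite Ht andbT //)).
by move=> [A B]; split.
Qed.

End Aux.

Local Open Scope ring_scope.

Lemma bern (x : rat) n : -1 <= x -> 1 + n%:R * x <= (1 + x) ^+ n.
Proof.
move=> Hx; elim: n => [|n IH]; first by rewrite expr0 mul0r addr0.
rewrite exprS.
have H1 : 0 <= 1 + x by lra.
have H2 := ler_wpM2l H1 IH.
apply: le_trans H2.
have Hn : 0 <= n%:R :> rat by apply: ler0n.
rewrite -natr1.
nra.
Qed.

Lemma half_bound (k : nat) : (0 < k)%N -> (1 + ((2 * k)%:R)^-1) ^+ k <= 2 :> rat.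
Proof.
move=> Hk.
have HK : 0 < k%:R :> rat by rewrite ltr0n.
set h := ((2 * k)%:R)^-1 : rat.
have Hh : h * (2 * k%:R) = 1 by rewrite /h natrM mulVf // mulf_neq0 // gt_eqF.
have Hh0 : 0 < h by rewrite /h invr_gt0 ltr0n muln_gt0.
have HK1 : 1 <= k%:R :> rat by rewrite ler1n.
have Hh1 : h <= 1 / 2.
  have : 0 <= h * (k%:R - 1) by apply: mulr_ge0; lra.
  nra.
have B := bern (- h) k ltac:(lra).
have Hkh : k%:R * h = 1 / 2 by nra.
have P : (1 + h) ^+ k * (1 + - h) ^+ k <= 1.
  rewrite -exprMn; apply: exprn_ile1; nra.
have Q0 : 0 <= (1 + h) ^+ k by apply: exprn_ge0; lra.
set P1 := (1 + h) ^+ k in P Q0 *.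
set Q1 := (1 + - h) ^+ k in P B *.
nra.
Qed.

Lemma pow_bound (c1 : rat) (m k r v t : nat) : 0 < c1 -> 8 / c1 <= m%:R ->
  (1 <= k)%N -> (0 < r)%N -> c1 * (k * r)%:R <= v%:R -> (t <= k)%N ->
  ((v + 3 + 2 * r)%:R / (v.+1)%:R) ^+ t <= 2 ^+ m :> rat.
Proof.
move=> Hc1 Hm Hk Hr Hv Ht.
have HK1 : 1 <= k%:R :> rat by rewrite ler1n.
have HR1 : 1 <= r%:R :> rat by rewrite ler1n.
have HV0 : 0 <= v%:R :> rat by apply: ler0n.
have HM0 : 0 <= m%:R :> rat by apply: ler0n.
rewrite natrM in Hv.
set K := k%:R : rat in HK1 Hv *.
set R := r%:R : rat in HR1 Hv *.
set V := v%:R : rat in HV0 Hv *.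
set M := m%:R : rat in HM0 Hm *.
have HMc : 8 <= M * c1 by rewrite -ler_pdivrMr.
have HE0 : 0 < (v.+1)%:R :> rat by rewrite ltr0n.
have EE : (v.+1)%:R = V + 1 :> rat by rewrite -natr1.
have ED : (v + 3 + 2 * r)%:R = V + 3 + 2 * R :> rat.
  rewrite !natrD /V /R; lra.
set h := ((2 * k)%:R)^-1 : rat.
have Hh : h * (2 * K) = 1 by rewrite /h natrM mulVf // mulf_neq0 // gt_eqF // ltr0n.
have Hh0 : 0 < h by rewrite /h invr_gt0 ltr0n muln_gt0.
have S1 : (2 * R + 2) * (2 * K) <= M * (V + 1).
  have a1 : 4 * K <= 4 * R * K by nra.
  have a2 : 8 * (R * K) <= M * c1 * (R * K) by apply: ler_wpM2r => //; nra.
  have a3 : M * (c1 * (K * R)) <= M * V by apply: ler_wpM2l.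
  nra.
have S2 : 2 * R + 2 <= h * (M * (V + 1)).
  have := ler_wpM2l (ltW Hh0) S1. nra.
set x := (v + 3 + 2 * r)%:R / (v.+1)%:R.
have Hx1 : 1 <= x by rewrite /x ler_pdivlMr // mul1r ED EE; lra.
have Hx2 : x <= 1 + M * h.
  rewrite /x ler_pdivrMr // ED EE; nra.
have B := bern h m ltac:(lra).
have Hxm : x <= (1 + h) ^+ m by apply: le_trans Hx2 _; exact: B.
apply: le_trans (ler_weXn2l Hx1 Ht) _.
apply: le_trans (_ : ((1 + h) ^+ m) ^+ k <= _).
  by apply: lerXn2r => //; rewrite ?nnegrE //; lra.
rewrite -exprM mulnC exprM; apply: lerXn2r; rewrite ?nnegrE //.
- by apply: exprn_ge0; lra.
- exact: half_bound.
Qed.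

Theorem theorem3 (c1 c2 a1 a2 : rat) :
  0 < c1 -> 0 < c2 -> 0 < a1 -> 0 < a2 ->
  exists C : rat,
    forall (disp : Order.disp_t) (T : orderType disp) (k r p v n : nat)
      (input : nat -> seq T) (st : nat -> nat -> seq T),
    (1 <= k)%N -> p = (r ^ k)%N ->
    uniq (flatten [seq input i | i <- iota 0 p]) ->
    n = (\sum_(i < p) size (input i))%N ->
    (forall i, (i < p)%N ->
       a1 * n%:R / p%:R <= (size (input i))%:R <= a2 * n%:R / p%:R) ->
    c1 * (k * r)%:R <= v%:R <= c2 * (k * r)%:R ->
    ms_execution r k v input st ->
    forall t i, (t <= k)%N -> (i < p)%N ->
      (size (st t i))%:R <= C * n%:R / p%:R.
Proof.
move=> Hc1 Hc2 Ha1 Ha2.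
pose m := Num.Def.archi_bound (8 / c1).
have Hm : 8 / c1 <= m%:R.
  apply: ltW; apply: archi_boundP; apply: divr_ge0 => //; exact: ltW.
exists (a2 + 2 ^+ m).
move=> disp T k r p v n input st Hk Hp Hu Hn Hin /andP [Hv _] Hex t i Ht Hi.
have Hr : (0 < r)%N.
  case: (posnP r) => [Er|//]; move: Hi; rewrite Hp Er exp0n //.
have Hp0 : (0 < p)%N by apply: leq_ltn_trans Hi.
have Hnp : 0 <= n%:R / p%:R :> rat by apply: divr_ge0; apply: ler0n.
have HC : n%:R / p%:R * 2 ^+ m <= (a2 + 2 ^+ m) * n%:R / p%:R.
  rewrite -[X in _ <= X]mulrA [X in _ <= X]mulrC; apply: ler_wpM2l => //; rewrite lerDr; exact: ltW.
case: (posnP t) => [Et | Ht0].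
  rewrite Et; have [H0 _] := Hex; rewrite H0 size_sort.
  have /andP [_ H2] := Hin i Hi.
  apply: le_trans H2 _; rewrite -!mulrA; apply: ler_wpM2r => //.
  by rewrite lerDl exprn_ge0.
rewrite Hp in Hu Hn Hi.
have [_ HB] := exec_bound _ _ _ _ _ _ Hr Hu Hn Hex _ Ht.
have := HB Ht0 i Hi; rewrite -Hp -(ler_nat rat) !natrM !natrX => H.
have HE : 0 < (v.+1)%:R :> rat by rewrite ltr0n.
have HP : 0 < p%:R :> rat by rewrite ltr0n.
have X : (size (st t i))%:R <= n%:R / p%:R * ((v + 3 + 2 * r)%:R / (v.+1)%:R) ^+ t :> rat.
  rewrite expr_div_n mulf_div ler_pdivlMr; last by rewrite mulr_gt0 // exprn_gt0.
  by rewrite mulrA.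
apply: le_trans X _; apply: le_trans HC.
apply: ler_wpM2l => //; exact: pow_bound Hc1 Hm Hk Hr Hv Ht.
Qed.
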